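(* Let $k>1$ and let $\mathcal{F}_1$ be the foliation on $\mathbb{P}^2_k=\mathbb{P}(1,1,k)$ (of normal degree $2k+1$) induced by $$\delta=-k\,x_2(x_2-x_0x_1^{k-1})dx_0+k\,x_0x_2(x_1^{k-1}-x_0x_1^{k-2})dx_1+x_0(x_2-x_1^{k})dx_2.$$ Then no $\mathcal{F}_1$-invariant algebraic curve passes through the point $[1:1:1]$.
   Context: $\mathbb{P}(1,1,k)$ is the quotient of $\mathbb{C}^3\setminus\{0\}$ by $t\cdot(x_0,x_1,x_2)=(tx_0,tx_1,t^kx_2)$. An algebraic curve is the zero set of a nonconstant quasi-homogeneous polynomial $F$ (weights $1,1,k$); it is invariant by the foliation defined by $\delta$ if $\delta\wedge dF=F\Theta$ for some polynomial 2-form $\Theta$. *)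

(* Defs.v *)
From Stdlib Require Import Reals.
From mathcomp Require Import all_boot all_algebra.
From mathcomp Require Import Rstruct complex.
From mathcomp Require Import mpoly.
Set Implicit Arguments. Unset Strict Implicit. Unset Printing Implicit Defensive.
Import GRing.Theory.
Local Open Scope ring_scope.

Definition CC : fieldType := complex Rdefinitions.R.

Notation poly3 := {mpoly CC[3]}.

Definition i0 : 'I_3 := @Ordinal 3 0 isT.
Definition i1 : 'I_3 := @Ordinal 3 1 isT.
Definition i2 : 'I_3 := @Ordinal 3 2 isT.

Definition wdeg (k : nat) (m : 'X_{1..3}) : nat := (m i0 + m i1 + k * m i2)%N.

Definition quasi_homogeneous (k : nat) (F : poly3) : Prop :=
  exists d : nat, forall m, m \in msupp F -> wdeg k m = d.

Definition nonconstant (F : poly3) : Prop := forall c : CC, F <> c%:MP.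

Definition delta_coef (k : nat) (i : 'I_3) : poly3 :=
  let x0 := 'X_i0 in let x1 := 'X_i1 in let x2 := 'X_i2 in
  if val i == 0%N then - (k%:R) * x2 * (x2 - x0 * x1 ^+ (k.-1))
  else if val i == 1%N then k%:R * x0 * x2 * (x1 ^+ (k.-1) - x0 * x1 ^+ (k.-2))
  else x0 * (x2 - x1 ^+ k).

(* coefficient of dx_i /\ dx_j in delta /\ dF *)
Definition wedge_dF (k : nat) (F : poly3) (i j : 'I_3) : poly3 :=
  delta_coef k i * F^`M(j) - delta_coef k j * F^`M(i).

(* delta /\ dF = F * Theta for some polynomial 2-form
   Theta = sum_{i<j} Theta_ij dx_i /\ dx_j *)
Definition invariant_by (k : nat) (F : poly3) : Prop :=
  exists Theta : 'I_3 -> 'I_3 -> poly3,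
    forall i j : 'I_3, (i < j)%N -> wedge_dF k F i j = F * Theta i j.

Definition vanishes_at_111 (F : poly3) : Prop := F.@[fun _ : 'I_3 => (1 : CC)] = 0.

(* Main.v *)
Require Import Defs.
From mathcomp Require Import all_boot all_algebra.
From mathcomp Require Import mpoly.
From mathcomp Require Import Rstruct complex.
From mathcomp Require Import ring.
Set Implicit Arguments. Unset Strict Implicit. Unset Printing Implicit Defensive.
Import GRing.Theory Num.Theory.
Local Open Scope ring_scope.

Section Two.
Variable R : numFieldType.
Local Notation P := {poly {poly R}}.

Definition dx (p : P) : P := map_poly (@deriv R) p.
Definition Xi : P := ('X)%:P.
Definition Wop (k : nat) (f : P) : P :=
  Xi * ('X * dx f) - Xi * dx f + ('X * ('X * f^`())) *+ k - (Xi * ('X * f^`())) *+ k.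
Definition ev (p : P) : R := (p.[1]).[1].

Lemma coef_dx p i : (dx p)`_i = (p`_i)^`().
Proof. by rewrite /dx coef_map. Qed.

Lemma dxM p q : dx (p * q) = dx p * q + p * dx q.
Proof.
apply/polyP=> i; rewrite coef_dx coefD !coefM raddf_sum -big_split /=.
by apply: eq_bigr => j _; rewrite derivM !coef_dx.
Qed.

Lemma dxX : dx 'X = 0.
Proof. by apply/polyP=> i; rewrite coef_dx coefX coef0; case: (i == 1)%N; rewrite ?derivC // -polyC1 derivC. Qed.

Lemma dxXi : dx Xi = 1.
Proof. by rewrite /dx /Xi map_polyC /= derivX. Qed.

Lemma size_le_of_mul (S : idomainType) (p q : {poly S}) m :
  p != 0 -> (size (q * p)%R <= size p + m)%N -> (size q <= m.+1)%N.
Proof.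
move=> p0; have [->|q0] := eqVneq q 0; first by rewrite size_poly0.
rewrite size_mul // => h.
have sp : (0 < size p)%N by rewrite size_poly_gt0.
have sq : (0 < size q)%N by rewrite size_poly_gt0.
by move: h; rewrite -(prednK sp) -(prednK sq) /= !addSn addnS ltnS => h; rewrite ltnS; 
  rewrite -(leq_add2l (size p).-1) ; rewrite addnC; apply: leq_trans h _; rewrite addnC. 
Qed.

Lemma sizeXderiv (p : {poly R}) : (size ('X * p^`())%R <= size p)%N.
Proof.
have [->|p0] := eqVneq p 0; first by rewrite deriv0 mulr0 size_poly0.
have [->|d0] := eqVneq p^`() 0; first by rewrite mulr0 size_poly0.
by rewrite mulrC size_mulX // lt_size_deriv.
Qed.

Lemma coefXderiv (S : ringType) (p : {poly S}) i : ('X * p^`())`_i = p`_i *+ i.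
Proof. by rewrite coefXM; case: i => [|i] //=; rewrite ?mulr0n // coef_deriv. Qed.

Lemma coefW k f i : (Wop k f)`_i =
  'X * ((if i == 0%N then 0 else (f`_i.-1)^`()) - (f`_i)^`()) +
  ((if i == 0%N then 0 else f`_i.-1 *+ i.-1) - 'X * (f`_i *+ i)) *+ k.
Proof.
rewrite /Wop /Xi !coefB coefD !coefB !coefMn !coefCM [('X * ('X * _))`_i]coefXM !coefXderiv !coefXM !coef_dx.
case: i => [|i] /=; rewrite ?mulr0n; ring.
Qed.

End Two.


Section Two2.
Variable R : numFieldType.
Local Notation P := {poly {poly R}}.

Lemma splitX (S : ringType) (H : {poly S}) : H`_0 = 0 -> H = drop_poly 1 H * 'X.
Proof.
move=> h0; rewrite -{1}(poly_take_drop 1 H) expr1.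
have -> : take_poly 1 H = 0.
  by apply/polyP=> j; rewrite coef_take_poly coef0; case: j.
by rewrite add0r.
Qed.

Lemma L2 k (H G : {poly R}) : H != 0 ->
  ('X * ('X * H^`())) *+ k = G * H -> G`_0 = 0.
Proof.
elim: {H} (size H) {-2}H (leqnn (size H)) G => [|s IH] H hs G H0 E.
  by move: H0; rewrite -size_poly_eq0 -leqn0 hs.
have [h0|h0] := eqVneq H`_0 0; last first.
  move: (congr1 (fun p : {poly R} => p`_0) E) => /=; rewrite coefMn coefXM /= mul0rn coef0M.
  by move/esym/eqP; rewrite mulf_eq0 (negbTE h0) orbF => /eqP.
set H2 := drop_poly 1 H.
have eH : H = H2 * 'X by apply: splitX.
have H20 : H2 != 0 by apply: contraNneq H0; rewrite eH => ->; rewrite mul0r.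
have hs2 : (size H2 <= s)%N.
  by move: hs; rewrite eH size_mulX.
have := IH H2 hs2 (G - 'X *+ k) H20.
rewrite coefB coefMn coefX /= mul0rn subr0; apply.
apply: (mulIf (negbT (polyX_eq0 R))) => /=.
move: E; rewrite eH derivM derivX => E.
have -> : (G - 'X *+ k) * H2 * 'X = G * (H2 * 'X) - ('X * H2 * 'X) *+ k by ring.
rewrite -E; ring.
Qed.

End Two2.


Section Two3.
Variable R : numFieldType.
Local Notation P := {poly {poly R}}.

Definition rho (f : P) : {poly R} := map_poly (horner_eval (0 : R)) f.

Lemma coef_rho (f : P) i : (rho f)`_i = (f`_i)`_0.
Proof. by rewrite /rho coef_map /= horner_evalE horner_coef0. Qed.

Lemma rhoW k (f : P) : rho (Wop k f) = ('X * ('X * (rho f)^`())) *+ k.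
Proof.
rewrite /Wop /rho /Xi !(rmorphB, rmorphD, rmorphMn, rmorphM) /= map_polyC map_polyX /=.
rewrite horner_evalE hornerX deriv_map !mul0r !subr0.
ring.
Qed.

Lemma sizeW k (f : P) : (size (Wop k f) <= size f + 1)%N.
Proof.
apply/leq_sizeP => j hj.
have j0 : j != 0%N by case: j hj; rewrite ?addn1.
rewrite coefW (negbTE j0) !nth_default ?deriv0 ?mulr0 ?mul0rn ?subr0 ?mulr0 ?mul0rn //.
- by rewrite subr0 mul0rn addr0.
- by apply: leq_trans hj; rewrite leq_addr.
- by rewrite -ltnS prednK ?lt0n // -addn1.
Qed.

Lemma caseC k (hk : (0 < k)%N) (f g : P) :
  f`_0 != 0 -> rho f != 0 -> Wop k f = g * f -> ev f != 0.
Proof.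
move=> f00 rf0 E.
have f0 : f != 0 by apply: contraNneq f00 => ->; rewrite coef0.
have E0 : - ('X * (f`_0)^`()) = g`_0 * f`_0.
  move: (congr1 (fun p : P => p`_0) E) => /=; rewrite coefW coef0M /= mulr0n mulr0 => <-.
  by rewrite subr0 mul0rn addr0 sub0r mulrN.
have g0C : g`_0 = ((g`_0)`_0)%:P.
  apply: size1_polyC; apply: (size_le_of_mul (p := f`_0)) => //.
  by rewrite -E0 size_opp addn0 sizeXderiv.
set a := (g`_0)`_0 in g0C.
have Ej : forall j, - ((f`_0)`_j *+ j) = a * (f`_0)`_j.
  by move=> j; move: (congr1 (fun p : {poly R} => p`_j) E0); rewrite coefN coefXderiv g0C coefCM.
have Erho : ('X * ('X * (rho f)^`())) *+ k = rho g * rho f by rewrite -rhoW E /rho rmorphM.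
have := L2 rf0 Erho; rewrite coef_rho -/a => a0.
have f0C : f`_0 = ((f`_0)`_0)%:P.
  apply: size1_polyC; apply/leq_sizeP => j hj.
  by move/eqP: (Ej j); rewrite a0 mul0r oppr_eq0 mulrn_eq0 (gtn_eqF hj) /= => /eqP.
have H00 : (rho f)`_0 != 0.
  by rewrite coef_rho; apply: contraNneq f00 => h; rewrite f0C h.
have G1 : (rho g)`_1 = 0.
  move: (congr1 (fun p : {poly R} => p`_1) Erho) => /=.
  rewrite coefMn coefXM /= coefXM /= mul0rn coefM !big_ord_recl big_ord0 /=.
  rewrite coef_rho -/a a0 mul0r add0r addr0 => /esym/eqP.
  by rewrite mulf_eq0 (negbTE H00) orbF => /eqP.
have sg : (size g <= 2)%N.
  by apply: (size_le_of_mul (p := f)) => //; rewrite -E sizeW.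
set n := (size f).-1.
have sf : size f = n.+1 by rewrite /n prednK // size_poly_gt0.
have fn0 : f`_n != 0 by rewrite -lead_coef_eq0 /lead_coef sf /= in f0.
have En : 'X * (f`_n)^`() + f`_n *+ n *+ k = g`_1 * f`_n.
  move: (congr1 (fun p : P => p`_n.+1) E) => /=.
  rewrite coefW /= [f`_n.+1]nth_default ?sf // deriv0 subr0 mul0rn mulr0 subr0 => ->.
  rewrite coefM !big_ord_recl /= big1 ?addr0.
    by rewrite [f`_n.+1]nth_default ?sf // mulr0 add0r subSS subn0.
  by move=> i _; rewrite nth_default ?mul0r // (leq_trans sg).
have g1C : g`_1 = ((g`_1)`_0)%:P.
  apply: size1_polyC; apply: (size_le_of_mul (p := f`_n)) => //.
  rewrite -En addn0; apply/leq_sizeP => j hj.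
  by rewrite coefD coefXderiv !coefMn nth_default // !mul0rn addr0.
have g10 : g`_1 = 0 by rewrite g1C -coef_rho G1.
move: En; rewrite g10 mul0r => En.
set j := (size f`_n).-1.
have fnj : (f`_n)`_j != 0 by rewrite -lead_coef_eq0 in fn0.
move: (congr1 (fun p : {poly R} => p`_j) En) => /=.
rewrite coefD coefXderiv !coefMn coef0 -mulrnA -mulrnDr => /eqP.
rewrite mulrn_eq0 (negbTE fnj) orbF addn_eq0 muln_eq0 => /andP [_ /orP [/eqP n0|]]; last first.
  by rewrite eqn0Ngt hk.
have f1 : f = (f`_0)%:P by apply: size1_polyC; rewrite sf n0.
by rewrite /ev f1 !hornerC f0C hornerC -coef_rho.
Qed.
End Two3.


Section Two4.
Variable R : numFieldType.
Local Notation P := {poly {poly R}}.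

Lemma evM (p q : P) : ev (p * q) = ev p * ev q.
Proof. by rewrite /ev !hornerM. Qed.

Lemma evX : ev ('X : P) = 1.
Proof. by rewrite /ev hornerX hornerC. Qed.

Lemma WopMX k (f : P) : Wop k (f * 'X) = Wop k f * 'X + (f * ('X * ('X - (@Xi R)))) *+ k.
Proof. rewrite /Wop dxM dxX derivM derivX; ring. Qed.

Lemma WopMXi k (f : P) : Wop k ((@Xi R) * f) = (@Xi R) * Wop k f + (@Xi R) * ('X - 1) * f.
Proof.
have dXi : ((@Xi R) : P)^`() = 0 by rewrite /Xi derivC.
rewrite /Wop dxM dxXi derivM dXi; ring.
Qed.

Lemma Xi_neq0 : ((@Xi R) : P) != 0.
Proof. by rewrite /Xi polyC_eq0 polyX_eq0. Qed.

Lemma key k (hk : (0 < k)%N) (f g : P) : f != 0 -> Wop k f = g * f -> ev f != 0.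
Proof.
suff: forall s (f : P) g, (size f + size (lead_coef f) <= s)%N -> f != 0 -> Wop k f = g * f -> ev f != 0.
  by move=> H; apply: H.
clear f g; elim=> [|s IH] f g hs f0 E.
  by move: hs; rewrite leqn0 addn_eq0 size_poly_eq0 (negbTE f0).
have [h0|h0] := eqVneq f`_0 0.
  set f2 := drop_poly 1 f.
  have ef : f = f2 * 'X by apply: splitX.
  have f20 : f2 != 0 by apply: contraNneq f0; rewrite ef => ->; rewrite mul0r.
  have hs2 : (size f2 + size (lead_coef f2) <= s)%N.
    by move: hs; rewrite ef size_mulX // lead_coefMX addSn.
  rewrite ef evM evX mulr1; apply: (IH f2 (g - ('X - (@Xi R)) *+ k) hs2 f20).
  apply: (mulIf (negbT (polyX_eq0 _))).
  move: E; rewrite ef WopMX => E.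
  have -> : (g - ('X - (@Xi R)) *+ k) * f2 * 'X = g * (f2 * 'X) - (f2 * ('X * ('X - (@Xi R)))) *+ k by ring.
  by rewrite -E; ring.
have [r0|r0] := eqVneq (rho f) 0; last exact: (caseC hk h0 r0 E).
set f2 := map_poly (drop_poly 1) f.
have ef : f = (@Xi R) * f2.
  apply/polyP=> i; rewrite /Xi coefCM /f2 coef_map_id0 ?drop_poly0r // mulrC.
  by apply: splitX; rewrite -coef_rho r0 coef0.
have f20 : f2 != 0 by apply: contraNneq f0; rewrite ef => ->; rewrite mulr0.
have hs2 : (size f2 + size (lead_coef f2) <= s)%N.
  move: hs; rewrite ef size_Cmul ?polyX_eq0 // lead_coefM lead_coefC mulrC size_mulX //.
  by rewrite addnS. by rewrite lead_coef_eq0.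
rewrite ef evM; apply: mulf_neq0; first by rewrite /ev /Xi hornerC hornerX oner_eq0.
apply: (IH f2 (g - ('X - 1)) hs2 f20).
apply: (mulfI Xi_neq0).
move: E; rewrite ef WopMXi => E.
have -> : (@Xi R) * ((g - ('X - 1)) * f2) = g * ((@Xi R) * f2) - (@Xi R) * ('X - 1) * f2 by ring.
by rewrite -E; ring.
Qed.

End Two4.


Notation RC := (Rdefinitions.R[i])%C.
Notation PP := {poly {poly RC}}.

Definition hh (i : 'I_3) : PP := if val i == 0%N then ('X)%:P else if val i == 1%N then 1 else 'X.
Definition phi (F : poly3) : PP := mmap ((@polyC {poly RC}) \o (@polyC RC)) hh F.

Lemma phiM F G : phi (F * G) = phi F * phi G.
Proof. exact: rmorphM. Qed.
Lemma phiB F G : phi (F - G) = phi F - phi G.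
Proof. exact: rmorphB. Qed.

Lemma phiX i : phi 'X_i = hh i.
Proof. by rewrite /phi mmapX mmap1U. Qed.

Lemma mmap1_hh m : mmap1 hh m = ('X^(m i0))%:P * 'X^(m i2).
Proof.
rewrite /mmap1 (bigD1 i0) // (bigD1 i2) // big1 /=.
  by rewrite mulr1 /hh /= rmorphXn.
move=> i /andP [] hi0 hi2; have -> : i = i1.
  apply: val_inj; move: hi0 hi2; case: i => [[|[|[|j]]] Hj] //=.
by rewrite /hh /= expr1n.
Qed.

Lemma dx1 : dx (1 : PP) = 0.
Proof. by rewrite /dx -polyC1 map_polyC /= derivC. Qed.

Lemma dxXn n : dx ('X^n : PP) = 0.
Proof. by elim: n => [|n IH]; rewrite ?expr0 ?dx1 // exprS dxM dxX IH !mulr0 mul0r addr0. Qed.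

Lemma dxC (c : {poly RC}) : dx (c%:P : PP) = (c^`())%:P.
Proof. by rewrite /dx map_polyC. Qed.

Lemma phi_mono c m : phi (c *: 'X_[m]) = (c%:P * 'X^(m i0))%:P * 'X^(m i2).
Proof. by rewrite /phi mmapZ mmapX mmap1_hh /= mulrA -polyCM. Qed.

Lemma phi_sum (r : seq 'X_{1..3}) (G : 'X_{1..3} -> poly3) :
  phi (\sum_(m <- r) G m) = \sum_(m <- r) phi (G m).
Proof. exact: raddf_sum. Qed.

Lemma dx_sum (r : seq 'X_{1..3}) (G : 'X_{1..3} -> PP) :
  dx (\sum_(m <- r) G m) = \sum_(m <- r) dx (G m).
Proof. exact: raddf_sum. Qed.

Lemma phi_d0 F : phi (F^`M(i0)) = dx (phi F).
Proof.
rewrite {1 2}(mpolyE F) raddf_sum /= phi_sum phi_sum dx_sum.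
apply: eq_bigr => m _.
rewrite mderivZ mderivX scalerA !phi_mono.
rewrite dxM dxXn mulr0 addr0 dxC derivM derivC mul0r add0r derivXn.
rewrite mnmBE mnm1E mnmBE mnm1E /= subn0 subn1.
congr (_%:P * _); rewrite polyCM rmorph_nat -mulr_natr; ring.
Qed.

Lemma phi_d2 F : phi (F^`M(i2)) = (phi F)^`().
Proof.
rewrite {1 2}(mpolyE F) raddf_sum /= phi_sum phi_sum raddf_sum.
apply: eq_bigr => m _.
rewrite mderivZ mderivX scalerA !phi_mono /= derivM derivC mul0r add0r derivXn.
rewrite mnmBE mnm1E mnmBE mnm1E /= subn0 subn1.
rewrite !polyCM !rmorph_nat -mulr_natr; ring.
Qed.

Lemma ev_phi F : ev (phi F) = F.@[fun _ : 'I_3 => (1 : CC)].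
Proof.
rewrite /phi /mmap /ev horner_sum horner_sum mevalE; apply: eq_bigr => m _.
rewrite mmap1_hh /= !hornerM !hornerC !hornerXn !expr1n -polyC1 !hornerC mul1r.
by rewrite big1 ?mulr1 // => i _; rewrite expr1n.
Qed.

Lemma coef_phi F e a :
  ((phi F)`_e)`_a = \sum_(m <- msupp F) (F@_m * (a == m i0)%:R) *+ (e == m i2).
Proof.
rewrite /phi /mmap !coef_sum; apply: eq_bigr => m _.
rewrite mmap1_hh /= mulrA -polyCM coefCM coefXn mulr_natr coefMn coefCM coefXn.
by [].
Qed.

Lemma delta0 k : phi (delta_coef k i0) = - (k%:R) * 'X * ('X - Xi RC).
Proof.
rewrite /delta_coef /= /phi !(rmorphM, rmorphB, rmorphN, rmorph_nat, rmorphXn) /=.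
by rewrite !mmapX !mmap1U /hh /= expr1n mulr1.
Qed.

Lemma delta2 k : phi (delta_coef k i2) = Xi RC * ('X - 1).
Proof.
rewrite /delta_coef /= /phi !(rmorphM, rmorphB, rmorphN, rmorph_nat, rmorphXn) /=.
by rewrite !mmapX !mmap1U /hh /= expr1n.
Qed.


Lemma phi_neq0 k (F : poly3) : quasi_homogeneous k F -> nonconstant F -> phi F != 0.
Proof.
move=> [d hom] ncF.
have [m0 Hm0] : exists m, m \in msupp F.
  move: (mpolyE F); case E: (msupp F) => [|m0 s].
    by rewrite big_nil => F0; case: (ncF 0); rewrite F0.
  by exists m0; rewrite mem_head.
apply/eqP => h.
have := congr1 (fun p : PP => (p`_(m0 i2))`_(m0 i0)) h.
rewrite /= !coef0 coef_phi (bigD1_seq m0) ?msupp_uniq //= big1 ?addr0; last first.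
  move=> m hne.
  have [hm|hm] := boolP (m \in msupp F); last by rewrite memN_msupp_eq0 // !mul0r mul0rn.
  case: eqP => e0; last by rewrite mulr0 mul0rn.
  case: eqP => e2; last by rewrite mulr0n.
  exfalso; move/negP: hne; apply; apply/eqP/mnmP => i.
  have := hom m hm; have := hom m0 Hm0; rewrite /wdeg -e0 -e2 => <- /eqP.
  rewrite eqn_add2r eqn_add2l => /eqP e1.
  have : i = i0 \/ i = i1 \/ i = i2.
    case: i => [[|[|[|j]]] Hj] //; [left|right;left|right;right]; exact: val_inj.
  by case=> [->|[->|->]].
rewrite !eqxx /= mulr1; rewrite mcoeff_msupp in Hm0.
by move/eqP; rewrite (negbTE Hm0).
Qed.

Theorem lemma4p10 (k : nat) : (1 < k)%N ->
  forall F : poly3,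
    quasi_homogeneous k F -> nonconstant F -> invariant_by k F ->
    ~ vanishes_at_111 F.
Proof.
move=> hk F qh nc [Th HTh] van.
have E := HTh i0 i2 isT.
move: (congr1 phi E); rewrite /wedge_dF phiB (phiM (delta_coef k i0)) (phiM (delta_coef k i2)).
rewrite delta0 delta2 phi_d0 phi_d2 phiM => E'.
have W : Wop k (phi F) = (- phi (Th i0 i2)) * phi F.
  have -> : Wop k (phi F) = - (- (k%:R) * 'X * ('X - Xi RC) * (phi F)^`() - Xi RC * ('X - 1) * dx (phi F)).
    by rewrite /Wop; ring.
  by rewrite E'; ring.
have hk0 : (0 < k)%N by apply: ltnW.
have := key hk0 (phi_neq0 qh nc) W.
by rewrite ev_phi van eqxx.
Qed.
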